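(* Let $\mathcal{A}$ be a finite alphabet with $\#\mathcal{A}\ge4$. Every labeled Rauzy class of irreducible pairs on $\mathcal{A}$ contains a good pair or a degenerate$^*$ pair.
   Context: Let $n=\#\mathcal{A}$. A pair is $\mathbf{p}=(p_0,p_1)$ with $p_0,p_1:\mathcal{A}\to\{1,\dots,n\}$ bijections. Irreducible: $p_0^{-1}\{1,\dots,k\}\ne p_1^{-1}\{1,\dots,k\}$ for $1\le k<n$ (the analogous definition applies on any alphabet). Rauzy move of type $\varepsilon$: $\varepsilon\mathbf{p}=(p'_0,p'_1)$, $p'_\varepsilon=p_\varepsilon$, and for $z=p_\varepsilon^{-1}(n)$, $p'_{1-\varepsilon}(b)=p_{1-\varepsilon}(b)$ if $p_{1-\varepsilon}(b)\le p_{1-\varepsilon}(z)$, $=p_{1-\varepsilon}(b)+1$ if $p_{1-\varepsilon}(z)<p_{1-\varepsilon}(b)<n$, $=p_{1-\varepsilon}(z)+1$ if $p_{1-\varepsilon}(b)=n$. The labeled Rauzy class of an irreducible $\mathbf{p}$ is the set of pairs reachable from $\mathbf{p}$ by Rauzy moves. $\mathbf{p}$ is standard if $p_0^{-1}(1)=p_1^{-1}(n)$ and $p_1^{-1}(1)=p_0^{-1}(n)$. For $\mathcal{A}'\subset\mathcal{A}$, the restriction of $\mathbf{p}$ to $\mathcal{A}'$ is the pair $(p'_0,p'_1)$ on $\mathcal{A}'$ with $p'_\varepsilon(b)=\#\{c\in\mathcal{A}':p_\varepsilon(c)\le p_\varepsilon(b)\}$. A standard pair $\mathbf{p}$ is degenerate$^*$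 if some $c\in\mathcal{A}$ has $p_0(c)=p_1(c)=n-1$. A standard pair $\mathbf{p}$ is good if its restriction to $\mathcal{A}\setminus\{p_0^{-1}(1),p_1^{-1}(1)\}$ (i.e. to positions $2,\dots,n-1$) is irreducible. *)

(* Defs.v *)
From Stdlib Require Import Relations.
From mathcomp Require Import all_boot.
Set Implicit Arguments. Unset Strict Implicit. Unset Printing Implicit Defensive.

(* A pair p = (p_0, p_1) is encoded as p : bool -> A -> nat,
   with p false = p_0 and p true = p_1 (so epsilon = 0 is false, 1 - epsilon is ~~ epsilon). *)
Definition pairT (A : finType) := bool -> A -> nat.

Definition is_pair (A : finType) (p : pairT A) : Prop :=
  forall e : bool,
    injective (p e) /\ (forall a, 1 <= p e a <= #|A|) /\
    (forall k, 1 <= k <= #|A| -> exists a, p e a = k).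

Definition irreducible_on (A : finType) (S : {set A}) (q : pairT A) : Prop :=
  forall k, 1 <= k < #|S| ->
    [set a in S | q false a <= k] != [set a in S | q true a <= k].

Definition irreducible (A : finType) (p : pairT A) : Prop :=
  irreducible_on [set: A] p.

(* Restriction of p to the sub-alphabet S:
   p'_e(b) = #{c in S : p_e(c) <= p_e(b)} (only meaningful for b in S). *)
Definition restr (A : finType) (S : {set A}) (p : pairT A) : pairT A :=
  fun e b => #|[set c in S | p e c <= p e b]|.

Definition rauzy_move (A : finType) (e : bool) (p q : pairT A) : Prop :=
  exists z : A, p e z = #|A| /\
    (forall b, q e b = p e b) /\
    (forall b, q (~~ e) b =
       if p (~~ e) b <= p (~~ e) z then p (~~ e) b
       else if p (~~ e) b < #|A| then (p (~~ e) b).+1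
       else (p (~~ e) z).+1).

Definition rauzy_step (A : finType) (p q : pairT A) : Prop :=
  exists e : bool, rauzy_move e p q.

Definition in_rauzy_class (A : finType) (p q : pairT A) : Prop :=
  @clos_refl_trans (pairT A) (@rauzy_step A) p q.

Definition standard (A : finType) (p : pairT A) : Prop :=
  (exists a, p false a = 1 /\ p true a = #|A|) /\
  (exists b, p true b = 1 /\ p false b = #|A|).

Definition degenerate_star (A : finType) (p : pairT A) : Prop :=
  standard p /\ exists c, p false c = #|A|.-1 /\ p true c = #|A|.-1.

Definition inner_letters (A : finType) (p : pairT A) : {set A} :=
  [set a | (p false a != 1) && (p true a != 1)].

Definition good (A : finType) (p : pairT A) : Prop :=
  standard p /\ irreducible_on (inner_letters p) (restr (inner_letters p) p).

(* Main.v *)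
Require Import Defs.
From Stdlib Require Import Relations FunctionalExtensionality Classical.
From mathcomp Require Import all_boot zify.
Set Implicit Arguments. Unset Strict Implicit. Unset Printing Implicit Defensive.

Section S.
Variable A : finType.
Local Notation n := #|A|.
Implicit Types p q : pairT A.

Ltac normn := repeat match goal with
 | H : context [@card.body _ ?m] |- _ => progress (change (@card.body _ m) with n in H)
 | |- context [@card.body _ ?m] => progress (change (@card.body _ m) with n)
 end.
Ltac nlia := normn; lia.

Lemma card_le p e k : is_pair p -> k <= n -> #|[set c | p e c <= k]| = k.
Proof.
move=> Hp; have [inj [bnd sur]] := Hp e.
elim: k => [|k IH] hk.
  apply/eqP; rewrite cards_eq0; apply/eqP/setP => c; rewrite !inE.
  have := bnd c; nlia.
have [a Ha] := sur k.+1 ltac:(nlia).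
have -> : [set c | p e c <= k.+1] = a |: [set c | p e c <= k].
  apply/setP => c; rewrite !inE.
  case: (eqVneq c a) => [->|hca]; first by rewrite Ha leqnn.
  have : p e c != p e a by apply/eqP => /inj h; rewrite h eqxx in hca.
  rewrite Ha /=; nlia.
rewrite cardsU1 IH; last nlia.
by rewrite inE Ha ltnn.
Qed.

Definition mvf (j v : nat) := if v <= j then v else if v < n then v.+1 else j.+1.

Lemma mvf_inj j v w : v <= n -> w <= n -> mvf j v = mvf j w -> v = w.
Proof.
move=> hv hw; rewrite /mvf; case: (leqP v j) => h1; case: (leqP w j) => h2;
case: (ltnP v n) => h3; case: (ltnP w n) => h4; nlia.
Qed.

Lemma move_pair e p q : rauzy_move e p q -> is_pair p -> is_pair q.
Proof.
move=> [z [Hz [He Hne]]] Hp e'.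
case: (eqVneq e' e) => [->|hne].
  have [inj [bnd sur]] := Hp e.
  split; [move=> x y; rewrite !He; exact: inj|split].
    by move=> a; rewrite He.
  by move=> k hk; have [a Ha] := sur k hk; exists a; rewrite He.
have -> : e' = ~~ e by destruct e; destruct e'.
have [inj [bnd sur]] := Hp (~~ e).
set j := p (~~ e) z.
have hj := bnd z.
have Hq : forall b, q (~~ e) b = mvf j (p (~~ e) b) by move=> b; rewrite Hne.
split; [|split].
- move=> x y; rewrite !Hq => h; apply: inj; apply: (@mvf_inj j).
  + by have := bnd x; nlia.
  + by have := bnd y; nlia.
  + exact: h.
- move=> a; rewrite Hq /mvf; have := bnd a; case: (leqP (p (~~ e) a) j); case: (ltnP (p (~~ e) a) n); nlia.
- move=> k hk.
  case: (leqP k j) => hkj.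
    have [c Hc] := sur k ltac:(nlia); exists c; rewrite Hq Hc /mvf; case: (leqP k j); nlia.
  case: (eqVneq k j.+1) => [->|hk1].
    have [c Hc] := sur n ltac:(nlia); exists c; rewrite Hq Hc /mvf ltnn.
    case: (leqP n j); nlia.
  have [c Hc] := sur k.-1 ltac:(nlia); exists c; rewrite Hq Hc /mvf.
  case: (leqP k.-1 j); case: (ltnP k.-1 n); nlia.
Qed.


Lemma move_irr e p q : rauzy_move e p q -> is_pair p -> irreducible p -> irreducible q.
Proof.
move=> [z [Hz [He Hne]]] Hp Hirr k hk.
rewrite cardsT in hk.
apply/negP => /eqP E.
have [inj [bnd sur]] := Hp (~~ e).
set j := p (~~ e) z.
have hj := bnd z.
have Hq : forall b, q (~~ e) b = mvf j (p (~~ e) b) by move=> b; rewrite Hne.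
case: (leqP k j) => hkj.
  have Hx : forall e' c, (q e' c <= k) = (p e' c <= k).
    move=> e' c; case: (eqVneq e' e) => [->|hne]; first by rewrite He.
    have -> : e' = ~~ e by destruct e; destruct e'.
    rewrite Hq /mvf; have := bnd c.
    case: (leqP (p (~~ e) c) j); case: (ltnP (p (~~ e) c) n); nlia.
  have := Hirr k; rewrite cardsT => /(_ hk) /negP; apply; apply/eqP/setP => c.
  move/setP: E => /(_ c); rewrite !inE !Hx; done.
move/setP: E => /(_ z); rewrite !inE.
have h1 : q e z = n by rewrite He.
have h2 : q (~~ e) z = j by rewrite Hq /mvf leqnn.
destruct e; rewrite /= in h1 h2; rewrite h1 h2; (have -> : (n <= k) = false by apply/negbTE; nlia); (have -> : (j <= k) = true by apply/idP; nlia); done.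
Qed.

Lemma reach_inv p q : in_rauzy_class p q -> is_pair p -> irreducible p ->
  is_pair q /\ irreducible q.
Proof.
elim => [x y [e Hm]|x|x y w _ IH1 _ IH2] Hp Hi.
- split; [exact: (move_pair Hm Hp) | exact: (move_irr Hm Hp Hi)].
- by [].
- have [H1 H2] := IH1 Hp Hi; exact: IH2.
Qed.

Definition rotf (j r v : nat) :=
  if v <= j then v else if v + r <= n then v + r else v + r - (n - j).

Definition rotp e j r p : pairT A :=
  fun e' b => if e' == e then p e' b else rotf j r (p e' b).

Lemma rot_move e j r p z : p e z = n -> p (~~ e) z = j -> j < n ->
  (forall b, p (~~ e) b <= n) -> r < n - j ->
  rauzy_move e (rotp e j r p) (rotp e j r.+1 p).
Proof.
move=> Hz Hj hjn Hb hr; exists z; rewrite /rotp eqxx; split => //.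
split => // b.
have -> : (~~ e == e) = false by case: e {Hz Hj Hb}.
have Rj : rotf j r j = j by rewrite /rotf leqnn.
rewrite Hj Rj.
have hb := Hb b; rewrite /rotf.
case: (leqP (p (~~ e) b) j) => h1.
  by rewrite h1.
case: (leqP (p (~~ e) b + r) n) => h2;
case: (leqP (p (~~ e) b + r.+1) n) => h3.
- have -> : (p (~~ e) b + r <= j) = false by apply/negbTE; nlia.
  have -> : (p (~~ e) b + r < n) = true by apply/idP; nlia.
  nlia.
- have -> : (p (~~ e) b + r <= j) = false by apply/negbTE; nlia.
  have -> : (p (~~ e) b + r < n) = false by apply/negbTE; nlia.
  nlia.
- nlia.
- have -> : (p (~~ e) b + r - (n - j) <= j) = false by apply/negbTE; nlia.
  have -> : (p (~~ e) b + r - (n - j) < n) = true by apply/idP; nlia.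
  nlia.
Qed.

Lemma rotp0 e j p : (forall b, p (~~ e) b <= n) -> rotp e j 0 p = p.
Proof.
move=> Hb; apply: functional_extensionality => e'.
apply: functional_extensionality => b; rewrite /rotp.
case: (eqVneq e' e) => // hne.
have -> : e' = ~~ e by destruct e; destruct e'.
rewrite /rotf addn0 Hb; case: leqP => //.
Qed.

Lemma rot_reach e j r p z : p e z = n -> p (~~ e) z = j -> j < n ->
  (forall b, p (~~ e) b <= n) -> r <= n - j ->
  in_rauzy_class p (rotp e j r p).
Proof.
move=> Hz Hj hjn Hb; elim: r => [|r IH] hr.
  rewrite rotp0 //; exact: rt_refl.
apply: rt_trans (IH ltac:(nlia)) _; apply: rt_step; exists e.
exact: rot_move Hz Hj hjn Hb _.
Qed.


Lemma reach_trans p q r : in_rauzy_class p q -> in_rauzy_class q r -> in_rauzy_class p r.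
Proof. move=> H1 H2; exact: (rt_trans _ _ _ _ _ H1 H2). Qed.

Lemma rotpE e j r p b : rotp e j r p e b = p e b.
Proof. by rewrite /rotp eqxx. Qed.

Lemma rotpNE e j r p b : rotp e j r p (~~ e) b = rotf j r (p (~~ e) b).
Proof. by rewrite /rotp; case: e. Qed.

Lemma rotpT j r p b : rotp false j r p true b = rotf j r (p true b).
Proof. by []. Qed.
Lemma rotpF j r p b : rotp true j r p false b = rotf j r (p false b).
Proof. by []. Qed.

Lemma last_lt p e z : is_pair p -> irreducible p -> 2 <= n -> p e z = n ->
  p (~~ e) z < n.
Proof.
move=> Hp Hi hn Hz.
have [inj1 [bnd1 _]] := Hp e.
have [inj2 [bnd2 _]] := Hp (~~ e).
case: (ltnP (p (~~ e) z) n) => // h.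
have Hz2 : p (~~ e) z = n by have := bnd2 z; nlia.
exfalso.
have := Hi n.-1; rewrite cardsT => /(_ ltac:(nlia)) /negP; apply; apply/eqP/setP => c.
rewrite !inE.
have E : forall e', p e' z = n -> (p e' c <= n.-1) = (c != z).
  move=> e' He'; have [inj [bnd _]] := Hp e'.
  case: (eqVneq c z) => [->|hcz]; first by rewrite He'; apply/negbTE; nlia.
  have : p e' c != p e' z by apply/eqP => /inj h'; rewrite h' eqxx in hcz.
  rewrite He'; have := bnd c; nlia.
destruct e; rewrite /= in Hz Hz2; rewrite !E //.
Qed.

Lemma claimA p : is_pair p -> irreducible p -> 2 <= n ->
  exists q, in_rauzy_class p q /\ exists a, q false a = n /\ q true a = 1.
Proof.
move=> Hp Hi hn.
set G := exists q, in_rauzy_class p q /\ exists a, q false a = n /\ q true a = 1.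
have [a0 Ha0] : exists a, p false a = n by have [_ [_ sur]] := Hp false; apply: sur; nlia.
suff : forall k, (exists q, in_rauzy_class p q /\ exists a, q false a = n /\ q true a = k) -> G.
  apply; exists p; split; [exact: rt_refl| by exists a0].
elim/ltn_ind => k IH [q [Hpq [al [Hal1 Hal2]]]].
case: (classic G) => // nG; exfalso.
have [Hq Hqi] := reach_inv Hpq Hp Hi.
have minP : forall q' d, in_rauzy_class p q' -> q' false d = n -> k <= q' true d.
  move=> q' d H1 H2; case: (leqP k (q' true d)) => // h; exfalso.
  by apply: nG; apply: (IH _ h); exists q'; split => //; exists d.
have [injf [bndf surf]] := Hq false.
have [injt [bndt surt]] := Hq true.
case: (eqVneq k 1) => [hk1|hk1].
  by apply: nG; exists q; split => //; exists al; rewrite Hal2 hk1.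
have hk1' : 2 <= k by have := bndt al; rewrite Hal2; nlia.
have hkn : k < n by rewrite -Hal2; exact: (last_lt (e:=false) Hq Hqi hn Hal1).
have key : forall c, k <= q true c -> k <= q false c.
  move=> c hc; case: (eqVneq c al) => [->|hcal]; first by rewrite Hal1; nlia.
  have hc' : k < q true c.
    have : q true c != q true al by apply/eqP => /injt h'; rewrite h' eqxx in hcal.
    rewrite Hal2; nlia.
  set q' := rotp false k (n - q true c) q.
  have Hq' : in_rauzy_class q q'.
    apply: (rot_reach (e:=false) (z:=al)) => //=; try nlia.
    by move=> b; case/andP: (bndt b).
  have Hpq' : in_rauzy_class p q' := reach_trans Hpq Hq'.
  have [Hq'p Hq'i] := reach_inv Hpq' Hp Hi.
  have q'c : q' true c = n.
    rewrite /q' rotpT /rotf (leqNgt _ k) hc' /= subnKC ?leqnn //; by case/andP: (bndt c).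
  have q'f : forall b, q' false b = q false b by move=> b; rewrite /q' (rotpE false).
  have hi : q false c < n by rewrite -q'f; exact: (last_lt (e:=true) Hq'p Hq'i hn q'c).
  have key2 : forall d, q false c < q false d -> k <= q true d.
    move=> d hd.
    set q'' := rotp true (q false c) (n - q false d) q'.
    have Hq'' : in_rauzy_class q' q''.
      apply: (rot_reach (e:=true) (z:=c)); rewrite /= ?q'f //; try nlia.
      all: try by move=> b; rewrite q'f; case/andP: (bndf b).
    have h1 : q'' false d = n.
      rewrite /q'' rotpF q'f /rotf (leqNgt _ (q false c)) hd /= subnKC ?leqnn //.
      have h := bndf d. nlia.
    have := minP q'' d (reach_trans Hpq' Hq'') h1.
    rewrite /q'' (rotpE true) /q' rotpT /rotf.
    case: (leqP (q true d) k) => h2 //; move=> _; nlia.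
  have sub : [set c' | q true c' <= k.-1] \subset [set c' | q false c' <= (q false c).-1].
    apply/subsetP => c'; rewrite !inE => h.
    case: (leqP (q false c') (q false c).-1) => // h2; exfalso.
    case: (eqVneq c' c) => [e1|hne].
      by rewrite e1 in h; nlia.
    have : q false c' != q false c by apply/eqP => /injf h'; rewrite h' eqxx in hne.
    move=> hne2; have := key2 c' ltac:(nlia); nlia.
  have := subset_leq_card sub; rewrite !card_le //; try nlia.
have sub : [set c | q false c <= k.-1] \subset [set c | q true c <= k.-1].
  apply/subsetP => c; rewrite !inE => h.
  case: (leqP (q true c) k.-1) => // h2; exfalso.
  have := key c ltac:(nlia); nlia.
have E : [set c | q false c <= k.-1] = [set c | q true c <= k.-1].
  apply/eqP; rewrite eqEcard sub !card_le //; nlia.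
have := Hqi k.-1; rewrite cardsT => /(_ ltac:(nlia)) /negP; apply; apply/eqP/setP => c.
move/setP: E => /(_ c); rewrite !inE; done.
Qed.


Lemma pinj p e : is_pair p -> injective (p e).
Proof. by move=> Hp; case: (Hp e). Qed.
Lemma pbnd p e a : is_pair p -> 1 <= p e a <= n.
Proof. by move=> Hp; case: (Hp e) => _ [h _]; exact: h. Qed.
Lemma psur p e k : is_pair p -> 1 <= k <= n -> exists a, p e a = k.
Proof. by move=> Hp; case: (Hp e) => _ [_ h]; exact: h. Qed.

Lemma std_exists p : is_pair p -> irreducible p -> 2 < n ->
  exists q, in_rauzy_class p q /\ standard q.
Proof.
move=> Hp Hi hn.
have [q [Hpq [al [Hal1 Hal2]]]] := claimA Hp Hi ltac:(nlia).
have [Hq Hqi] := reach_inv Hpq Hp Hi.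
have [a Ha] := psur false Hq (k:=1) ltac:(nlia).
have hat : 1 < q true a.
  have : a != al by apply/eqP => e1; rewrite e1 Hal1 in Ha; nlia.
  move=> hne; have : q true a != q true al by apply/eqP => /(pinj Hq) h; rewrite h eqxx in hne.
  have := pbnd true a Hq; rewrite Hal2; nlia.
exists (rotp false 1 (n - q true a) q); split.
  apply: reach_trans Hpq _; apply: (rot_reach (e:=false) (z:=al)) => //=; try nlia.
  by move=> b; have := pbnd true b Hq; nlia.
split.
- exists a; rewrite (rotpE false) rotpT Ha /rotf (leqNgt _ 1) hat /=.
  move: (pbnd true a Hq) => hb; case: leqP; nlia.
- exists al; rewrite (rotpE false) rotpT Hal2 Hal1 /rotf leqnn; done.
Qed.

Lemma inner_memE q e c : is_pair q -> standard q ->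
  (c \in inner_letters q) = (1 < q e c < n).
Proof.
move=> Hq [[a [Ha1 Ha2]] [b [Hb1 Hb2]]]; rewrite inE.
have hf : (q true c == 1) = (q false c == n).
  apply/eqP/eqP => h.
    by rewrite -Hb2; congr (q false _); apply: (pinj (e:=true) Hq); rewrite h Hb1.
  by rewrite -Hb1; congr (q true _); apply: (pinj (e:=false) Hq); rewrite h Hb2.
have ht : (q false c == 1) = (q true c == n).
  apply/eqP/eqP => h.
    by rewrite -Ha2; congr (q true _); apply: (pinj (e:=false) Hq); rewrite h Ha1.
  by rewrite -Ha1; congr (q false _); apply: (pinj (e:=true) Hq); rewrite h Ha2.
have := pbnd false c Hq; have := pbnd true c Hq.
case: e; [rewrite ht | rewrite hf];
case: (eqVneq (q true c) n); case: (eqVneq (q false c) n);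
case: (eqVneq (q true c) 1); case: (eqVneq (q false c) 1); nlia.
Qed.

Lemma inner_card q e v : is_pair q -> standard q -> 1 <= v < n ->
  #|[set c in inner_letters q | q e c <= v]| = v.-1.
Proof.
move=> Hq Hs hv.
have [w Hw] := psur e Hq (k:=1) ltac:(nlia).
have -> : [set c in inner_letters q | q e c <= v] = [set c | q e c <= v] :\ w.
  apply/setP => c; have hI := inner_memE e c Hq Hs; rewrite inE in hI; rewrite !inE hI.
  case: (eqVneq c w) => [->|hne]; first by rewrite Hw; nlia.
  have : q e c != q e w by apply/eqP => /(pinj Hq) h; rewrite h eqxx in hne.
  rewrite Hw; have := pbnd e c Hq; case: (leqP (q e c) v); nlia.
have := cardsD1 w [set c | q e c <= v]; rewrite card_le ?inE ?Hw //; nlia.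
Qed.

Lemma restrE q e c : is_pair q -> standard q -> c \in inner_letters q ->
  restr (inner_letters q) q e c = (q e c).-1.
Proof.
move=> Hq Hs hc; rewrite /restr inner_card //.
by move: hc; rewrite (inner_memE e c Hq Hs); nlia.
Qed.

Lemma inner_size q : 1 < n -> is_pair q -> standard q -> #|inner_letters q| = n.-2.
Proof.
move=> hn Hq Hs.
have -> : inner_letters q = [set c in inner_letters q | q false c <= n.-1].
  apply/setP => c; have hI := inner_memE false c Hq Hs.
  rewrite [in RHS]inE; case: (boolP (c \in inner_letters q)) => //=.
  by rewrite hI; nlia.
rewrite inner_card //; nlia.
Qed.

Lemma good_of q : 1 < n -> is_pair q -> standard q ->
  (forall K, 1 < K < n.-1 -> ~ (forall c, c \in inner_letters q ->
      (q false c <= K) = (q true c <= K))) -> good q.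
Proof.
move=> hn Hq Hs H; split => // k; rewrite inner_size // => hk.
apply/negP => /eqP E; apply: (H k.+1); first nlia.
move=> c hc; have hc' := hc; rewrite inE in hc'.
move/setP: E => /(_ c); rewrite !inE hc' /= !restrE //.
have := (inner_memE false c Hq Hs); have := (inner_memE true c Hq Hs).
rewrite hc => h1 h2.
case: (leqP (q false c) k.+1); case: (leqP (q true c) k.+1);
case: (leqP (q false c).-1 k); case: (leqP (q true c).-1 k); nlia.
Qed.


Ltac splitif := repeat match goal with
  |- context [if ?b then _ else _] =>
     lazymatch b with context [if _ then _ else _] => fail | _ =>
       case: (boolP b) => ?; rewrite /= end
  end.

Lemma rotf_le j r v : v <= n -> j < n -> r <= n - j -> rotf j r v <= n.
Proof. by move=> *; rewrite /rotf; splitif; nlia. Qed.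

Lemma rotf_ge1 j r v : 1 <= v -> rotf j r v >= 1.
Proof. by move=> *; rewrite /rotf; splitif; nlia. Qed.

Lemma arF K u v : 1 < K -> K < u -> u < n.-1 -> 1 <= v <= n ->
 (v <= 1 -> rotf (u - K + 1) (K - 1) (rotf 1 (n - K) v) = v) /\
 (1 < v <= K -> rotf (u - K + 1) (K - 1) (rotf 1 (n - K) v) = v + u - K) /\
 (K < v <= u -> rotf (u - K + 1) (K - 1) (rotf 1 (n - K) v) = v - K + 1) /\
 (u < v -> rotf (u - K + 1) (K - 1) (rotf 1 (n - K) v) = v).
Proof. by move=> *; rewrite /rotf; splitif; nlia. Qed.

Lemma arT jx v : 1 < jx -> jx < n.-1 -> 1 <= v <= n ->
 (v <= 1 -> rotf 1 (n - jx - 1) (rotf jx 1 v) = v) /\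
 (1 < v <= jx -> rotf 1 (n - jx - 1) (rotf jx 1 v) = v + n - jx - 1) /\
 (jx < v < n -> rotf 1 (n - jx - 1) (rotf jx 1 v) = v - jx + 1) /\
 (v = n -> rotf 1 (n - jx - 1) (rotf jx 1 v) = n).
Proof. by move=> *; rewrite /rotf; splitif; nlia. Qed.


Lemma notgood q : 1 < n -> is_pair q -> standard q -> ~ good q ->
  exists K, (1 < K < n.-1) /\ forall c, c \in inner_letters q ->
      (q false c <= K) = (q true c <= K).
Proof.
move=> hn Hq Hs ng.
case: (classic (exists K, (1 < K < n.-1) /\ forall c, c \in inner_letters q ->
      (q false c <= K) = (q true c <= K))) => // nex; exfalso.
apply: ng; apply: good_of => // K hK H; apply: nex; by exists K.
Qed.

Lemma fixC q : 3 < n -> is_pair q -> irreducible q -> standard q ->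
  ~ degenerate_star q -> ~ good q -> exists q', in_rauzy_class q q' /\ good q'.
Proof.
move=> hn Hq Hqi Hs nd ng.
have Hs' := Hs; case: Hs' => [[a [Ha1 Ha2]] [b [Hb1 Hb2]]].
have inIf : forall c, c \in inner_letters q -> 1 < q false c < n.
  by move=> c; rewrite (inner_memE false c Hq Hs).
have inIt : forall c, c \in inner_letters q -> 1 < q true c < n.
  by move=> c; rewrite (inner_memE true c Hq Hs).
have inI : forall c, 1 < q false c < n -> c \in inner_letters q.
  by move=> c; rewrite (inner_memE false c Hq Hs).
have inI' : forall c, 1 < q true c < n -> c \in inner_letters q.
  by move=> c; rewrite (inner_memE true c Hq Hs).
have bf := fun c => pbnd false c Hq.
have bt := fun c => pbnd true c Hq.
pose P := fun K => (1 < K < n.-1) && [forall c, (c \in inner_letters q) ==>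
      ((q false c <= K) == (q true c <= K))].
have exP : exists K, P K.
  have [K [hK HK]] := notgood ltac:(nlia) Hq Hs ng; exists K; rewrite /P hK /=.
  by apply/forallP => c; apply/implyP => hc; rewrite HK.
have ubP : forall K, P K -> K <= n by move=> K /andP [hK _]; nlia.
case: (ex_maxnP exP ubP) => K /andP [hK /forallP PK'] maxK.
have PK : forall c, c \in inner_letters q -> (q false c <= K) = (q true c <= K).
  by move=> c hc; move: (PK' c); rewrite hc => /eqP.
have [x Hx] := psur false Hq (k:=K) ltac:(nlia).
set jx := q true x.
have xI : x \in inner_letters q by apply: inI; nlia.
have hjx : 1 < jx <= K.
  have := PK x xI; have := inIt x xI; rewrite Hx /jx; nlia.
have [d Hd] := psur true Hq (k:=n.-1) ltac:(nlia).
set u := q false d.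
have dI : d \in inner_letters q by apply: inI'; nlia.
have hu : K < u < n.-1.
  have := PK d dI; have := inIf d dI; rewrite Hd /u => h1 h2.
  case: (eqVneq (q false d) n.-1) => h3.
    by exfalso; apply: nd; split => //; exists d; split.
  nlia.
pose p1 := rotp true 1 (n - K) q.
pose p2 := rotp false jx 1 p1.
pose p3 := rotp true (u - K + 1) (K - 1) p2.
pose p4 := rotp false 1 (n - jx - 1) p3.
have R1 : in_rauzy_class q p1.
  apply: (rot_reach (e:=true) (z:=a)) => //=; try nlia.
  by move=> c; have := bf c; nlia.
have p1x : p1 false x = n by rewrite /p1 rotpF Hx /rotf; splitif; nlia.
have R2 : in_rauzy_class p1 p2.
  apply: (rot_reach (e:=false) (z:=x)) => //=; try nlia.
  by move=> c; rewrite /p1 (rotpE true); have := bt c; nlia.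
have p2d1 : p2 true d = n by rewrite /p2 rotpT /p1 (rotpE true) Hd /rotf; splitif; nlia.
have p2d2 : p2 false d = u - K + 1.
  by rewrite /p2 (rotpE false) /p1 rotpF -/u /rotf; splitif; nlia.
have R3 : in_rauzy_class p2 p3.
  apply: (rot_reach (e:=true) (z:=d)) => //=; try nlia.
  move=> c; rewrite /p2 (rotpE false) /p1 rotpF; apply: rotf_le; try nlia.
  by have := bf c; nlia.
have p3b1 : p3 false b = n.
  by rewrite /p3 rotpF /p2 (rotpE false) /p1 rotpF Hb2 /rotf; splitif; nlia.
have p3b2 : p3 true b = 1.
  by rewrite /p3 (rotpE true) /p2 rotpT /p1 (rotpE true) Hb1 /rotf; splitif; nlia.
have R4 : in_rauzy_class p3 p4.
  apply: (rot_reach (e:=false) (z:=b)) => //=; try nlia.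
  move=> c; rewrite /p3 (rotpE true) /p2 rotpT /p1 (rotpE true); apply: rotf_le; try nlia.
  by have := bt c; nlia.
pose Ff v := if v <= 1 then v else if v <= K then v + u - K else if v <= u then v - K + 1 else v.
pose Ft v := if v <= 1 then v else if v <= jx then v + n - jx - 1 else if v < n then v - jx + 1 else n.
have hF : forall c, p4 false c = Ff (q false c).
  move=> c; have := arF (v:=q false c) (K:=K) (u:=u); rewrite /p4 (rotpE false) /p3 rotpF /p2 (rotpE false) /p1 rotpF.
  have := bf c; rewrite /Ff; splitif; nlia.
have hT : forall c, p4 true c = Ft (q true c).
  move=> c; have := arT (v:=q true c) (jx:=jx); rewrite /p4 rotpT /p3 (rotpE true) /p2 rotpT /p1 (rotpE true).
  have := bt c; rewrite /Ft; splitif; nlia.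
have Rq4 : in_rauzy_class q p4 := reach_trans (reach_trans (reach_trans R1 R2) R3) R4.
have [H4 _] := reach_inv Rq4 Hq Hqi.
exists p4; split => //.
have Hs4 : standard p4.
  split.
    by exists a; rewrite hF hT Ha1 Ha2 /Ff /Ft; splitif; nlia.
  by exists b; rewrite hF hT Hb1 Hb2 /Ff /Ft; splitif; nlia.
apply: good_of; [nlia | done | done | move=> J hJ H].
have I4 : forall c, c \in inner_letters q -> c \in inner_letters p4.
  move=> c hc; rewrite inE hF hT; have := inIf c hc; have := inIt c hc.
  rewrite /Ff /Ft; splitif; nlia.
have HJ : forall c, c \in inner_letters q -> (p4 false c <= J) = (p4 true c <= J).
  by move=> c hc; apply: H; apply: I4.
case: (ltnP J (u - K + 1)) => hJ1.
  case: (ltnP jx K) => hjx2.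
    have [w Hw] := psur true Hq (k:=jx.+1) ltac:(nlia).
    have wI : w \in inner_letters q by apply: inI'; nlia.
    have := PK w wI; have := HJ w wI; rewrite hF hT.
    have := inIf w wI; rewrite Hw /Ff /Ft; splitif; nlia.
  have : P (J + K - 1).
    rewrite /P; apply/andP; split; first nlia.
    apply/forallP => c; apply/implyP => hc.
    have := PK c hc; have := HJ c hc; rewrite hF hT.
    have := inIf c hc; have := inIt c hc; rewrite /Ff /Ft; splitif; nlia.
  move/maxK; nlia.
case: (ltnP J u) => hJ2.
  have [v Hv] := psur false Hq (k:=u.+1) ltac:(nlia).
  have vI : v \in inner_letters q by apply: inI; nlia.
  have := PK v vI; have := HJ v vI; have := HJ d dI; rewrite !hF !hT.
  have := inIt v vI; rewrite Hv Hd -/u /Ff /Ft; splitif; nlia.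
have := HJ x xI; rewrite hF hT Hx -/jx /Ff /Ft; splitif; nlia.
Qed.

End S.

Unset Implicit Arguments.
Set Strict Implicit.

Theorem proposition6p3 (A : finType) (hA : 4 <= #|A|) (p : pairT A) :
  is_pair p -> irreducible p ->
  exists q, in_rauzy_class p q /\ (good q \/ degenerate_star q).
Proof.
move=> Hp Hi.
have h2 : 2 < #|A| by apply: leq_trans hA.
have [q [Hpq Hs]] := std_exists Hp Hi h2.
have [Hq Hqi] := reach_inv Hpq Hp Hi.
case: (classic (degenerate_star q)) => hd.
  by exists q; split => //; right.
case: (classic (good q)) => hg.
  by exists q; split => //; left.
have [q' [Hqq' Hg]] := fixC hA Hq Hqi Hs hd hg.
exists q'; split; last by left.
exact: reach_trans Hpq Hqq'.
Qed.
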